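(* Let $m,n,p,q,r,s$ be arbitrary integers. Let $$A(x_1,x_2,x_3,x_4)=\begin{bmatrix}x_1 & x_2 & x_3 & x_4\\ -nx_2 & x_1+mx_2 & -nx_4 & x_3+mx_4\\ -qx_3 & -qx_4 & x_1+px_3 & x_2+px_4\\ qnx_4 & -q(x_3+mx_4) & -nx_2-pnx_4 & x_1+mx_2+p(x_3+mx_4)\end{bmatrix}$$ and $$P(x_1,\dots,x_8)=\begin{bmatrix}A(x_1,\dots,x_4) & A(x_5,\dots,x_8)\\ -sA(x_5,\dots,x_8) & A(x_1,\dots,x_4)+rA(x_5,\dots,x_8)\end{bmatrix}.$$ Then for independent variables $x_i,y_i$, $P(x_1,\dots,x_8)P(y_1,\dots,y_8)=P(z_1,\dots,z_8)$, where $z_1,\dots,z_8$ are bilinear forms in the $x_i,y_i$ whose coefficients are integer polynomials in $m,n,p,q,r,s$; in particular $z_1=x_1y_1-nx_2y_2-qx_3y_3+qnx_4y_4-sx_5y_5+snx_6y_6+sqx_7y_7-sqnx_8y_8$. Consequently the octonary octic form $f=\det P$ satisfies $f(x_1,\dots,x_8)f(y_1,\dots,y_8)=f(z_1,\dots,z_8)$. *)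

(* Defs.v *)
From HB Require Import structures.
From mathcomp Require Import all_boot all_order all_algebra.
From mathcomp Require Import mpoly.
Set Implicit Arguments. Unset Strict Implicit. Unset Printing Implicit Defensive.
Import GRing.Theory.
Local Open Scope ring_scope.

Definition mx_of_rows (R : comRingType) (k : nat) (rows : seq (seq R)) : 'M[R]_k :=
  \matrix_(i < k, j < k) nth 0 (nth [::] rows i) j.

(* Index i : 'I_8 (variable x_{i+1} of the paper). *)
Definition ix (i : nat) : 'I_8 := inord i.

Definition Amx (R : comRingType) (m n p q x1 x2 x3 x4 : R) : 'M[R]_4 :=
  mx_of_rows 4
   [:: [:: x1; x2; x3; x4];
       [:: - (n * x2); x1 + m * x2; - (n * x4); x3 + m * x4];
       [:: - (q * x3); - (q * x4); x1 + p * x3; x2 + p * x4];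
       [:: q * n * x4; - (q * (x3 + m * x4)); - (n * x2) - p * n * x4;
           x1 + m * x2 + p * (x3 + m * x4)]].

Definition Pmx (R : comRingType) (m n p q r s : R) (x : 'I_8 -> R) : 'M[R]_(4 + 4) :=
  let A1 := Amx m n p q (x (ix 0)) (x (ix 1)) (x (ix 2)) (x (ix 3)) in
  let A2 := Amx m n p q (x (ix 4)) (x (ix 5)) (x (ix 6)) (x (ix 7)) in
  block_mx A1 A2 (- (s *: A2)) (A1 + r *: A2).

Definition fform (R : comRingType) (m n p q r s : R) (x : 'I_8 -> R) : R :=
  \det (Pmx m n p q r s x).

Definition params (m n p q r s : int) : 'I_6 -> int :=
  fun i => nth 0 [:: m; n; p; q; r; s] i.

Definition bilin (R : comRingType) (c : 'I_8 -> 'I_8 -> {mpoly int[6]})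
  (m n p q r s : int) (x y : 'I_8 -> R) : R :=
  \sum_(i < 8) \sum_(j < 8) ((c i j).@[params m n p q r s])%:~R * x i * y j.

(* Main.v *)
Require Import Defs.
From HB Require Import structures.
From mathcomp Require Import all_boot all_order all_algebra.
From mathcomp Require Import mpoly.
From mathcomp Require Import ring.
Set Implicit Arguments. Unset Strict Implicit.
Import GRing.Theory.
Local Open Scope ring_scope.

Definition gamP (t t' : {mpoly int[6]}) (k i j : bool) : {mpoly int[6]} :=
  match k, i, j with
  | false, false, false => 1
  | true, false, true => 1
  | true, true, false => 1
  | false, true, true => - t
  | true, true, true => t'
  | _, _, _ => 0
  end.

Definition gamR (R : comRingType) (t t' : R) (k i j : bool) : R :=
  match k, i, j with
  | false, false, false => 1
  | true, false, true => 1
  | true, true, false => 1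
  | false, true, true => - t
  | true, true, true => t'
  | _, _, _ => 0
  end.

Definition b0 (k : nat) := odd k.
Definition b1 (k : nat) := odd k./2.
Definition b2 (k : nat) := odd k./2./2.

Definition X6 (i : nat) (H : (i < 6)%N) : {mpoly int[6]} := 'X_(Ordinal H).

Definition cn (k i j : nat) : {mpoly int[6]} :=
  gamP (@X6 1 isT) (@X6 0 isT) (b0 k) (b0 i) (b0 j) *
  gamP (@X6 3 isT) (@X6 2 isT) (b1 k) (b1 i) (b1 j) *
  gamP (@X6 5 isT) (@X6 4 isT) (b2 k) (b2 i) (b2 j).

Definition cc : 'I_8 -> 'I_8 -> 'I_8 -> {mpoly int[6]} :=
  fun k i j => cn k i j.

Definition cvR (R : comRingType) (M N Pp Q Rr S : R) (k i j : nat) : R :=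
  gamR N M (b0 k) (b0 i) (b0 j) * gamR Q Pp (b1 k) (b1 i) (b1 j) *
  gamR S Rr (b2 k) (b2 i) (b2 j).

Lemma gamE (R : comRingType) (v : 'I_6 -> int) t t' k i j :
  ((gamP t t' k i j).@[v])%:~R = gamR ((t.@[v])%:~R : R) (t'.@[v])%:~R k i j.
Proof.
by case: k; case: i; case: j; rewrite /= ?meval1 ?meval0 ?mevalN ?rmorphN ?rmorph1 ?rmorph0.
Qed.

Lemma cnE (R : comRingType) (m n p q r s : int) k i j :
  (((cn k i j).@[params m n p q r s])%:~R : R) =
  cvR m%:~R n%:~R p%:~R q%:~R r%:~R s%:~R k i j.
Proof.
by rewrite /cn !rmorphM /= !gamE /X6 !mevalXU.
Qed.

Lemma ixE k : (k < 8)%N -> nat_of_ord (ix k) = k.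
Proof. by move=> Hk; rewrite /ix inordK. Qed.

Lemma sum8 (R : comRingType) (F : 'I_8 -> R) :
  \sum_(i < 8) F i = F (ix 0) + F (ix 1) + F (ix 2) + F (ix 3) + F (ix 4)
     + F (ix 5) + F (ix 6) + F (ix 7).
Proof.
rewrite !big_ord_recl big_ord0 addr0 /= !addrA.
by repeat congr (_ + _); congr F; apply/val_inj; rewrite /= ixE.
Qed.

Definition wA1 (R : comRingType) (m n p q a1 a2 a3 a4 b1 b2 b3 b4 : R) :=
  a1*b1 - n*(a2*b2) - q*(a3*b3 - n*(a4*b4)).
Definition wA2 (R : comRingType) (m n p q a1 a2 a3 a4 b1 b2 b3 b4 : R) :=
  a1*b2+a2*b1+m*(a2*b2) - q*(a3*b4+a4*b3+m*(a4*b4)).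
Definition wA3 (R : comRingType) (m n p q a1 a2 a3 a4 b1 b2 b3 b4 : R) :=
  a1*b3 - n*(a2*b4) + (a3*b1 - n*(a4*b2)) + p*(a3*b3 - n*(a4*b4)).
Definition wA4 (R : comRingType) (m n p q a1 a2 a3 a4 b1 b2 b3 b4 : R) :=
  a1*b4+a2*b3+m*(a2*b4) + (a3*b2+a4*b1+m*(a4*b2)) + p*(a3*b4+a4*b3+m*(a4*b4)).

Lemma Amul (R : comRingType) (m n p q a1 a2 a3 a4 b1 b2 b3 b4 : R) :
  Amx m n p q a1 a2 a3 a4 *m Amx m n p q b1 b2 b3 b4 =
  Amx m n p q (wA1 m n p q a1 a2 a3 a4 b1 b2 b3 b4) (wA2 m n p q a1 a2 a3 a4 b1 b2 b3 b4)
              (wA3 m n p q a1 a2 a3 a4 b1 b2 b3 b4) (wA4 m n p q a1 a2 a3 a4 b1 b2 b3 b4).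
Proof.
apply/matrixP => i j; rewrite !mxE !big_ord_recr big_ord0 /= !mxE /=.
rewrite /wA1 /wA2 /wA3 /wA4.
by case: i => [[|[|[|[|i]]]] Hi] //; case: j => [[|[|[|[|j]]]] Hj] //=; ring.
Qed.

Lemma AmxD (R : comRingType) (m n p q a1 a2 a3 a4 b1 b2 b3 b4 : R) :
  Amx m n p q a1 a2 a3 a4 + Amx m n p q b1 b2 b3 b4 =
  Amx m n p q (a1 + b1) (a2 + b2) (a3 + b3) (a4 + b4).
Proof.
apply/matrixP => i j; rewrite !mxE.
by case: i => [[|[|[|[|i]]]] Hi] //; case: j => [[|[|[|[|j]]]] Hj] //=; ring.
Qed.

Lemma AmxZ (R : comRingType) (m n p q a1 a2 a3 a4 k : R) :
  k *: Amx m n p q a1 a2 a3 a4 = Amx m n p q (k * a1) (k * a2) (k * a3) (k * a4).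
Proof.
apply/matrixP => i j; rewrite !mxE.
by case: i => [[|[|[|[|i]]]] Hi] //; case: j => [[|[|[|[|j]]]] Hj] //=; ring.
Qed.

Lemma AmxN (R : comRingType) (m n p q a1 a2 a3 a4 : R) :
  - Amx m n p q a1 a2 a3 a4 = Amx m n p q (- a1) (- a2) (- a3) (- a4).
Proof.
apply/matrixP => i j; rewrite !mxE.
by case: i => [[|[|[|[|i]]]] Hi] //; case: j => [[|[|[|[|j]]]] Hj] //=; ring.
Qed.

Definition zR (R : comRingType) (M N Pp Q Rr S : R) (x y : 'I_8 -> R) (k : nat) : R :=
  let w f a b := f R M N Pp Q (x (ix a)) (x (ix (a+1))) (x (ix (a+2))) (x (ix (a+3)))
                   (y (ix b)) (y (ix (b+1))) (y (ix (b+2))) (y (ix (b+3))) in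
  match k with
  | 0 => w wA1 0 0 - S * w wA1 4 4
  | 1 => w wA2 0 0 - S * w wA2 4 4
  | 2 => w wA3 0 0 - S * w wA3 4 4
  | 3 => w wA4 0 0 - S * w wA4 4 4
  | 4 => w wA1 0 4 + w wA1 4 0 + Rr * w wA1 4 4
  | 5 => w wA2 0 4 + w wA2 4 0 + Rr * w wA2 4 4
  | 6 => w wA3 0 4 + w wA3 4 0 + Rr * w wA3 4 4
  | _ => w wA4 0 4 + w wA4 4 0 + Rr * w wA4 4 4
  end.

Lemma zE (m n p q r s : int) (R : comRingType) (x y : 'I_8 -> R) k : (k < 8)%N ->
  bilin (cc (ix k)) m n p q r s x y =
  zR m%:~R n%:~R p%:~R q%:~R r%:~R s%:~R x y k.
Proof.
move=> Hk; rewrite /bilin sum8.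
rewrite !sum8 /cc !cnE !ixE //.
rewrite /zR /wA1 /wA2 /wA3 /wA4 /cvR /=.
by case: k Hk => [|[|[|[|[|[|[|[|k]]]]]]]] //= _; ring.
Qed.

Theorem mainTheorem10 :
  exists c : 'I_8 -> 'I_8 -> 'I_8 -> {mpoly int[6]},
  forall (m n p q r s : int) (R : comRingType) (x y : 'I_8 -> R),
    let z : 'I_8 -> R := fun k => bilin (c k) m n p q r s x y in
    let M := m%:~R : R in let N := n%:~R : R in let Pp := p%:~R : R in
    let Q := q%:~R : R in let Rr := r%:~R : R in let S := s%:~R : R in
    [/\ Pmx M N Pp Q Rr S x *m Pmx M N Pp Q Rr S y = Pmx M N Pp Q Rr S z,
        z (ix 0) = x (ix 0) * y (ix 0) - N * x (ix 1) * y (ix 1) - Q * x (ix 2) * y (ix 2)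
                 + Q * N * x (ix 3) * y (ix 3) - S * x (ix 4) * y (ix 4)
                 + S * N * x (ix 5) * y (ix 5) + S * Q * x (ix 6) * y (ix 6)
                 - S * Q * N * x (ix 7) * y (ix 7)
      & fform M N Pp Q Rr S x * fform M N Pp Q Rr S y = fform M N Pp Q Rr S z].
Proof.
exists cc => m n p q r s R x y z M N Pp Q Rr S.
have hz k : (k < 8)%N -> z (ix k) = zR M N Pp Q Rr S x y k.
  by move=> Hk; rewrite /z zE.
have mul : Pmx M N Pp Q Rr S x *m Pmx M N Pp Q Rr S y = Pmx M N Pp Q Rr S z.
  rewrite /Pmx /= !hz // mulmx_block.
  rewrite !mulmxDr !mulmxDl !mulmxN !mulNmx -!scalemxAr -!scalemxAl !Amul.
  rewrite ?AmxZ ?AmxN ?AmxD ?AmxZ ?AmxN ?AmxD.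
  by rewrite /zR /wA1 /wA2 /wA3 /wA4 /=; congr block_mx; congr Amx; ring.
split => //.
- by rewrite hz // /zR /wA1 /=; ring.
- by rewrite /fform -det_mulmx mul.
Qed.
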